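(* Let $g\geq 3$ and let $\eta$ be an integer with $2\leq\eta\leq g$. Then there exist non-negative integers $g_1$, $i$ and $j$ such that (1) $2g_1\geq g-2$; (2) $i+j+1=\eta$; (3) $i+2j+2g_1=2g-2$; (4) $\underbrace{\mathcal{M}_{0,3}\times\cdots\times\mathcal{M}_{0,3}}_{i\text{ copies}}\times\underbrace{\mathcal{M}_{1,2}\times\cdots\times\mathcal{M}_{1,2}}_{j\text{ copies}}\times\mathcal{M}_{g_1,2}\subset\partial\mathcal{M}_g$, i.e. a closed surface of genus $g$ can be pinched along disjoint simple closed curves to a nodal surface whose components are exactly $i$ thrice-punctured spheres, $j$ surfaces of genus $1$ with $2$ punctures and one surface of genus $g_1$ with $2$ punctures, each component being arbitrary in its moduli space.
   Context: $\mathcal{M}_{g,n}$ denotes the moduli space of complete finite-area hyperbolic surfaces of genus $g$ with $n$ punctures (cusps), $\mathcal{M}_g=\mathcal{M}_{g,0}$. $\partial\mathcal{M}_g$ is the boundary of the Deligne--Mumford compactification of $\mathcal{M}_g$; it is stratified, each stratum being a product of lower-dimensional moduli spaces $\mathcal{M}_{g_i,n_i}$, corresponding to the components of nodal surfaces obtained by pinching disjoint simple closed curves. *)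

(* Defs.v *)
(* Boundary strata of the Deligne--Mumford compactification
   are encoded combinatorially by their dual (stable) graphs. *)
From mathcomp Require Import all_boot.
Set Implicit Arguments. Unset Strict Implicit. Unset Printing Implicit Defensive.

(* A nodal (stable) curve type: V components (vertices 'I_V), each with a genus,
   and a list of nodes (edges, loops allowed) joining two components. *)
Record dual_graph := DualGraph {
  dg_V : nat;
  dg_genus : 'I_dg_V -> nat;
  dg_edges : seq ('I_dg_V * 'I_dg_V)
}.

(* number of punctures (node branches) on component v *)
Definition dg_val (G : dual_graph) (v : 'I_(dg_V G)) : nat :=
  count (fun e => e.1 == v) (dg_edges G) + count (fun e => e.2 == v) (dg_edges G).

Definition dg_adj (G : dual_graph) : rel 'I_(dg_V G) :=
  fun u v => has (fun e => ((e.1 == u) && (e.2 == v)) || ((e.1 == v) && (e.2 == u)))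
                 (dg_edges G).

Definition dg_connected (G : dual_graph) : Prop :=
  forall u v : 'I_(dg_V G), connect (@dg_adj G) u v.

Definition dg_stable (G : dual_graph) : Prop :=
  forall v : 'I_(dg_V G), 2 < 2 * dg_genus v + dg_val v.

(* arithmetic genus: sum g_v + #E - #V + 1 = g *)
Definition dg_total_genus_is (G : dual_graph) (g : nat) : Prop :=
  (\sum_(v < dg_V G) dg_genus v) + size (dg_edges G) + 1 = g + dg_V G.

Definition dg_types (G : dual_graph) : seq (nat * nat) :=
  [seq (dg_genus v, dg_val v) | v <- enum 'I_(dg_V G)].

(* G is the dual graph of a nodal surface in the boundary of M_g
   (obtained by pinching at least one curve of a closed genus-g surface) *)
Definition boundary_graph (g : nat) (G : dual_graph) : Prop :=
  [/\ dg_connected G, dg_stable G, dg_total_genus_is G g & 0 < size (dg_edges G)].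

(* The product  prod_k M_{g_k,n_k}  (types given as a list) is a stratum of
   the boundary of M_g. *)
Definition stratum_of_boundary (g : nat) (types : seq (nat * nat)) : Prop :=
  exists G : dual_graph, boundary_graph g G /\ perm_eq (dg_types G) types.

(* Main.v *)
Require Import Defs.
From mathcomp Require Import all_boot zify.
Set Implicit Arguments. Unset Strict Implicit.

Section C.
Variables (g1 j p : nat).
Let n := j + p.
Let V := (n + p).+1.

Definition nedges : seq (nat * nat) :=
  zip (iota 0 n) (iota 1 n) ++ (n, 0) :: zip (iota (j+1) p) (iota (n+1) p)
    ++ zip (iota (n+1) p) (iota (n+1) p).

Definition ngen (v : nat) := if v == 0 then g1 else if v <= j then 1 else 0.

Definition G := DualGraph (fun v : 'I_V => ngen v)
  [seq ((inord e.1 : 'I_V), (inord e.2 : 'I_V)) | e <- nedges].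

Lemma count_zip1 (s t : seq nat) v : size s = size t ->
  count (fun e : nat * nat => e.1 == v) (zip s t) = count_mem v s.
Proof.
move=> st; rewrite -[in RHS](unzip1_zip (eq_leq st)) count_map; exact: eq_count.
Qed.
Lemma count_zip2 (s t : seq nat) v : size s = size t ->
  count (fun e : nat * nat => e.2 == v) (zip s t) = count_mem v t.
Proof.
move=> st; rewrite -[in RHS](unzip2_zip (eq_leq (esym st))) count_map; exact: eq_count.
Qed.
Lemma cm_iota a m v : count_mem v (iota a m) = (a <= v < a + m).
Proof. by rewrite count_uniq_mem ?iota_uniq // mem_iota. Qed.

Lemma mem_zip' (s t : seq nat) a b : (a, b) \in zip s t -> a \in s /\ b \in t.
Proof.
elim: s t => [|x s IH] [|y t] //=; rewrite inE => /orP [/eqP [-> ->]|/IH [h1 h2]].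
  by rewrite !inE !eqxx.
by rewrite !inE h1 h2 !orbT.
Qed.

Lemma nedges_bound e : e \in nedges -> e.1 < V /\ e.2 < V.
Proof.
case: e => a b; rewrite /nedges !mem_cat inE mem_cat.
move=> /or4P [h|/eqP[-> ->]|h|h] /=; try (by rewrite /V; lia);
  move/mem_zip': h => [] /=; rewrite !mem_iota /V; lia.
Qed.

Lemma val_nat v : v < V ->
  count (fun e : nat * nat => e.1 == v) nedges + count (fun e : nat * nat => e.2 == v) nedges
  = if v <= j then 2 else 3.
Proof.
move=> vV; rewrite /nedges !count_cat /= !count_zip1 ?count_zip2 ?size_iota //
  !cm_iota ?count_cat ?count_zip1 ?count_zip2 ?size_iota // !cm_iota /V /n in vV *; case: ifP; lia.
Qed.

Lemma dg_val_G (v : 'I_V) : dg_val (G:=G) v = if nat_of_ord v <= j then 2 else 3.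
Proof.
rewrite /dg_val /= !count_map -val_nat //.
congr (_ + _); apply: eq_in_count => e /nedges_bound [h1 h2] /=;
  by rewrite -val_eqE /= inordK.
Qed.


Lemma zip_iota a d m : zip (iota a m) (iota (a + d) m) = [seq (x, x + d) | x <- iota a m].
Proof. elim: m a => [|m IH] a //=; rewrite -addSn IH; congr (_ :: _); lia. Qed.

Lemma adj_nat a b : (a, b) \in nedges -> dg_adj (G:=G) (inord a) (inord b).
Proof.
move=> h; apply/hasP; exists ((inord a : 'I_V), (inord b : 'I_V)); last by rewrite /= !eqxx.
exact: (map_f (fun e : nat * nat => ((inord e.1 : 'I_V), (inord e.2 : 'I_V))) h).
Qed.

Lemma conn0_cyc v : v <= n -> connect (@dg_adj G) (inord 0) (inord v).
Proof.
elim: v => [|v IH] vn; first exact: connect0.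
apply: connect_trans (IH (ltnW vn)) (connect1 _); apply: adj_nat.
rewrite /nedges mem_cat; apply/orP; left.
have -> : iota 1 n = iota (0 + 1) n by [].
rewrite zip_iota; have -> : v.+1 = v + 1 by rewrite addn1.
by apply: map_f; rewrite mem_iota; lia.
Qed.

Lemma conn0 (v : 'I_V) : connect (@dg_adj G) (inord 0) v.
Proof.
rewrite -(inord_val v); case: (leqP (nat_of_ord v) n) => vn; first exact: conn0_cyc.
have h : nat_of_ord v - p <= n by move: (ltn_ord v) vn; rewrite /V /n; lia.
apply: connect_trans (conn0_cyc h) (connect1 _); apply: adj_nat.
rewrite /nedges mem_cat; apply/orP; right; rewrite inE mem_cat; apply/orP; right.
apply/orP; left.
have -> : n + 1 = (j + 1) + p by rewrite /n; lia.
rewrite zip_iota.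
have -> : nat_of_ord v = (nat_of_ord v - p) + p by lia.
rewrite addnK; apply: map_f; rewrite mem_iota; have := ltn_ord v; rewrite /V /n in vn *; lia.
Qed.

Lemma G_connected : dg_connected G.
Proof.
move=> u v; have sym : connect_sym (@dg_adj G).
  apply: sym_connect_sym => x y; rewrite /dg_adj; apply: eq_has => e /=.
  by rewrite orbC.
by apply: connect_trans (conn0 v); rewrite sym; apply: conn0.
Qed.

Lemma G_stable : 0 < g1 -> dg_stable G.
move=> g1p v; rewrite dg_val_G /= /ngen; (do ?case: ifP => ?); lia. Qed.

Lemma G_genus : dg_total_genus_is G (g1 + j + p + 1).
Proof.
rewrite /dg_total_genus_is /= size_map /nedges size_cat /= size_cat !size_zip !size_iota.
rewrite -(big_mkord (fun _ => true) ngen) big_ltn; last by rewrite /V.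
rewrite (big_cat_nat (n:=j.+1)) //=; last by rewrite /V /n; lia.
rewrite (eq_big_nat _ _ (F2 := fun=> 1)); last by move=> i /andP [h1 h2]; rewrite /ngen; (do ?case: ifP => ?); lia.
rewrite (eq_big_nat _ _ (F1 := ngen) (F2 := fun=> 0)); last by move=> i /andP [h1 h2]; rewrite /ngen; (do ?case: ifP => ?); lia.
rewrite !sum_nat_const_nat /ngen eqxx /V /n; lia.
Qed.

Lemma map_cst (T : eqType) U (f : T -> U) c s : {in s, forall x, f x = c} -> map f s = nseq (size s) c.
Proof. elim: s => [|x s IH] //= h; rewrite h ?mem_head // IH // => y ys; apply: h; rewrite inE ys orbT. by []. Qed.

Lemma G_types : 0 < g1 ->
  perm_eq (dg_types G) (nseq (p + p) (0, 3) ++ nseq j (1, 2) ++ [:: (g1, 2)]).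
Proof.
move=> g1p; rewrite /dg_types.
rewrite (eq_map (g := (fun a => (ngen a, if a <= j then 2 else 3)) \o val)); last first.
  by move=> v /=; rewrite dg_val_G.
rewrite map_comp val_enum_ord.
have -> : dg_V G = 1 + (j + (p + p)) by rewrite /= /V /n; lia.
rewrite iotaD iotaD !map_cat.
rewrite (map_cst (s := iota (0 + 1) j) (c := (1, 2))); last first.
  move=> x; rewrite mem_iota /ngen => h.
  have /negbTE -> : x != 0 by lia.
  by have -> : x <= j by lia.
rewrite (map_cst (s := iota (0 + 1 + j) _) (c := (0, 3))); last first.
  move=> x; rewrite mem_iota /ngen => h.
  have /negbTE -> : x != 0 by lia.
  by have /negbTE -> : ~~ (x <= j) by lia.
rewrite !size_iota /= /ngen eqxx.
set A := (_ :: _).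
have -> : nseq (p + p) (0, 3) ++ nseq j (1, 2) ++ [:: (g1, 2)] = rev A.
  by rewrite /A rev_cons rev_cat !rev_nseq -cats1 catA.
by rewrite perm_sym perm_rev.
Qed.

Lemma G_stratum : 0 < g1 ->
  stratum_of_boundary (g1 + j + p + 1) (nseq (p + p) (0, 3) ++ nseq j (1, 2) ++ [:: (g1, 2)]).
Proof.
move=> g1p; exists G; split; last exact: G_types.
split; [exact: G_connected | exact: G_stable | exact: G_genus |].
by rewrite size_map /nedges size_cat /= addnS.
Qed.
End C.

Theorem lemma2p4 (g eta : nat) (hg : 3 <= g) (heta : 2 <= eta <= g) :
  exists g1 i j : nat,
    [/\ g - 2 <= 2 * g1,
        i + j + 1 = eta,
        i + 2 * j + 2 * g1 = 2 * g - 2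
      & stratum_of_boundary g (nseq i (0, 3) ++ nseq j (1, 2) ++ [:: (g1, 2)])].
Proof.
pose k := eta - 1.
pose g1 := maxn (g - 1 - k) ((g - 1) %/ 2).
pose j := 2 * g - 2 - 2 * g1 - k.
pose p := k + g1 + 1 - g.
have e : g = g1 + j + p + 1 by rewrite /p /j /g1 /k; lia.
exists g1, (p + p), j; split; try (rewrite /p /j /g1 /k; lia).
rewrite {1}e; apply: G_stratum; rewrite /g1; lia.
Qed.
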